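(* Assume (A1'). A function $u:J_T\to\mathbb{R}$ which is upper semicontinuous (resp. lower semicontinuous) is a sub-solution (resp. super-solution) of $u_t+H(x,u_x)=0$ on $J_T$ if and only if for every $\phi\in C^1_*(J_T)$ such that $u\le\phi$ (resp. $u\ge\phi$) on $J_T$ and $u=\phi$ at some $(t,x)\in J_T$: - if $x\in J_i^*$, then $\phi_t(t,x)+H_i(\phi_x(t,x))\le0$ (resp. $\ge0$); - if $x=0$, then either there exists $i\in I_N$ such that $\phi_t(t,0)+H_i(\phi^i_x(t,0))\le0$ (resp. $\ge0$), or $\phi_t(t,0)+\max_{i\in I_N}H_i^-(\phi^i_x(t,0))\le0$ (resp. $\ge0$).
   Context: Junction: fix an integer $N\ge1$ and $N$ distinct unit vectors $e_1,\dots,e_N\in\mathbb{R}^2$. Set $J_i=[0,\infty)e_i$, $J_i^*=J_i\setminus\{0\}$, $J=\bigcup_{i=1}^NJ_i$, $I_N=\{1,\dots,N\}$. Each $x\in J_i$ is written $x=x_ie_i$, $x_i\ge0$. $J$ carries the geodesic distance $d(x,y)=|x-y|$ if $x,y$ lie in a common branch, $d(x,y)=|x|+|y|$ otherwise. $J_T=(0,T)\times J$; balls are taken in $(0,\infty)\times J$. For $u$ on $J_T$, $u^i$ is its restriction to $(0,T)\times J_i$ as a function of $(t,x_i)$; $C^1_*(J_T)$ is the set of continuous $u$ with each $u^i\in C^1((0,T)\times[0,\infty))$; $u^i_x=\partial u^i/\partial x_i$, $u_x=u^i_x$ on $J_i^*$, $u_x(t,0)=(u^1_x(t,0),\dots,u^N_x(t,0))$.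 (A1'): for each $i\in I_N$, $H_i:\mathbb{R}\to\mathbb{R}$ is continuous with $H_i(p)\to+\infty$ as $|p|\to\infty$, and there is $p^i_0\in\mathbb{R}$ such that $H_i$ is non-increasing on $(-\infty,p_0^i]$ and non-decreasing on $[p_0^i,\infty)$. Then $H_i^-(p)=\inf_{q\le0}H_i(p+q)$. $H(x,p)=H_i(p)$ for $x\in J_i^*$, $H(0,p)=\max_iH_i^-(p_i)$ for $p\in\mathbb{R}^N$. Viscosity solutions: $u$ is a sub-solution (resp. super-solution) of $u_t+H(x,u_x)=0$ on $J_T$ if it is u.s.c. (resp. l.s.c.) and for every $\phi\in C^1_*(J_T)$, $P=(t,x)\in J_T$, $r>0$ with $u\le\phi$ (resp. $u\ge\phi$) on $B(P,r)$ and $u(P)=\phi(P)$: if $x\in J_i^*$ then $\phi_t(t,x)+H_i(\phi_x(t,x))\le0$ (resp. $\ge0$); if $x=0$ then $\phi_t(t,0)+\max_iH_i^-(\phi^i_x(t,0))\le0$ (resp. $\ge0$). *)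

(* Defs.v *)
From Stdlib Require Import Reals Lra Classical ClassicalDescription.
Open Scope R_scope.

Definition normR2 (p : R * R) : R := sqrt (fst p ^ 2 + snd p ^ 2).
Definition subR2 (p q : R * R) : R * R := (fst p - fst q, snd p - snd q).
Definition origin : R * R := (0, 0).

(** The point s e_i of branch J_i (branches indexed by i = 0, ..., N-1). *)
Definition pt (e : nat -> R * R) (i : nat) (s : R) : R * R :=
  (s * fst (e i), s * snd (e i)).

Definition junction_dirs (N : nat) (e : nat -> R * R) : Prop :=
  (1 <= N)%nat /\
  (forall i, (i < N)%nat -> normR2 (e i) = 1) /\
  (forall i j, (i < N)%nat -> (j < N)%nat -> i <> j -> e i <> e j).

Definition inJ (N : nat) (e : nat -> R * R) (x : R * R) : Prop :=
  exists i s, (i < N)%nat /\ 0 <= s /\ x = pt e i s.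

Definition inJstar (N : nat) (e : nat -> R * R) (i : nat) (s : R) (x : R * R) : Prop :=
  (i < N)%nat /\ 0 < s /\ x = pt e i s.

Definition sameBranch (N : nat) (e : nat -> R * R) (x y : R * R) : Prop :=
  exists i s s', (i < N)%nat /\ 0 <= s /\ 0 <= s' /\ x = pt e i s /\ y = pt e i s'.

Definition dJ (N : nat) (e : nat -> R * R) (x y : R * R) : R :=
  match excluded_middle_informative (sameBranch N e x y) with
  | left _ => normR2 (subR2 x y)
  | right _ => normR2 x + normR2 y
  end.

Definition inJT (N : nat) (e : nat -> R * R) (T t : R) (x : R * R) : Prop :=
  0 < t < T /\ inJ N e x.

Definition inBallJT (N : nat) (e : nat -> R * R) (T t : R) (x : R * R) (r t' : R) (y : R * R) : Prop :=
  inJT N e T t' y /\ Rabs (t' - t) < r /\ dJ N e x y < r.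

Definition usc_JT (N : nat) (e : nat -> R * R) (T : R) (u : R -> R * R -> R) : Prop :=
  forall t x, inJT N e T t x ->
  forall eps, 0 < eps -> exists delta, 0 < delta /\
    forall t' y, inBallJT N e T t x delta t' y -> u t' y < u t x + eps.

Definition lsc_JT (N : nat) (e : nat -> R * R) (T : R) (u : R -> R * R -> R) : Prop :=
  forall t x, inJT N e T t x ->
  forall eps, 0 < eps -> exists delta, 0 < delta /\
    forall t' y, inBallJT N e T t x delta t' y -> u t x - eps < u t' y.

Definition cont_JT (N : nat) (e : nat -> R * R) (T : R) (u : R -> R * R -> R) : Prop :=
  forall t x, inJT N e T t x ->
  forall eps, 0 < eps -> exists delta, 0 < delta /\
    forall t' y, inBallJT N e T t x delta t' y -> Rabs (u t' y - u t x) < eps.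

Definition inHS (T t s : R) : Prop := 0 < t < T /\ 0 <= s.

Definition cont_HS (T : R) (g : R -> R -> R) : Prop :=
  forall t s, inHS T t s ->
  forall eps, 0 < eps -> exists delta, 0 < delta /\
    forall t' s', inHS T t' s' -> Rabs (t' - t) < delta -> Rabs (s' - s) < delta ->
      Rabs (g t' s' - g t s) < eps.

Definition C1_HS (T : R) (f ft fs : R -> R -> R) : Prop :=
  cont_HS T ft /\ cont_HS T fs /\
  forall t s, inHS T t s ->
  forall eps, 0 < eps -> exists delta, 0 < delta /\
    forall t' s', inHS T t' s' -> Rabs (t' - t) < delta -> Rabs (s' - s) < delta ->
      Rabs (f t' s' - f t s - ft t s * (t' - t) - fs t s * (s' - s))
        <= eps * (Rabs (t' - t) + Rabs (s' - s)).

(** phi \in C^1_*(J_T), with time derivative Dt (phi_t(t,x) = Dt t x) and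
    branch space derivatives Dx (phi^i_x(t,s) = Dx i t s). *)
Definition C1star (N : nat) (e : nat -> R * R) (T : R) (phi : R -> R * R -> R)
    (Dt : R -> R * R -> R) (Dx : nat -> R -> R -> R) : Prop :=
  cont_JT N e T phi /\
  forall i, (i < N)%nat ->
    C1_HS T (fun t s => phi t (pt e i s)) (fun t s => Dt t (pt e i s)) (Dx i).

(** Infimum of a set of reals (0 by convention if not bounded below / empty). *)
Definition Rinf (E : R -> Prop) : R :=
  match excluded_middle_informative
          (bound (fun x => E (- x)) /\ exists x, E (- x)) with
  | left h => - proj1_sig (completeness _ (proj1 h) (proj2 h))
  | right _ => 0
  end.

Definition Hminus (H : R -> R) (p : R) : R :=
  Rinf (fun y => exists q, q <= 0 /\ y = H (p + q)).

Fixpoint maxUpTo (f : nat -> R) (n : nat) : R :=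
  match n with
  | O => f O
  | S m => Rmax (maxUpTo f m) (f (S m))
  end.

(** max_{i in I_N} f i  (N >= 1, indices 0..N-1) *)
Definition maxI (N : nat) (f : nat -> R) : R := maxUpTo f (N - 1).

Definition H0 (N : nat) (H : nat -> R -> R) (p : nat -> R) : R :=
  maxI N (fun i => Hminus (H i) (p i)).

Definition A1' (N : nat) (H : nat -> R -> R) : Prop :=
  forall i, (i < N)%nat ->
    (forall p, continuity_pt (H i) p) /\
    (forall M, exists K, forall p, K < Rabs p -> M < H i p) /\
    (exists p0, (forall p q, p <= q <= p0 -> H i q <= H i p) /\
                (forall p q, p0 <= p <= q -> H i p <= H i q)).

Definition subsol (N : nat) (e : nat -> R * R) (T : R) (H : nat -> R -> R)
    (u : R -> R * R -> R) : Prop :=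
  usc_JT N e T u /\
  forall phi Dt Dx, C1star N e T phi Dt Dx ->
  forall t x r, inJT N e T t x -> 0 < r ->
    (forall t' y, inBallJT N e T t x r t' y -> u t' y <= phi t' y) ->
    u t x = phi t x ->
    (forall i s, inJstar N e i s x -> Dt t x + H i (Dx i t s) <= 0) /\
    (x = origin -> Dt t origin + H0 N H (fun i => Dx i t 0) <= 0).

Definition supersol (N : nat) (e : nat -> R * R) (T : R) (H : nat -> R -> R)
    (u : R -> R * R -> R) : Prop :=
  lsc_JT N e T u /\
  forall phi Dt Dx, C1star N e T phi Dt Dx ->
  forall t x r, inJT N e T t x -> 0 < r ->
    (forall t' y, inBallJT N e T t x r t' y -> phi t' y <= u t' y) ->
    u t x = phi t x ->
    (forall i s, inJstar N e i s x -> 0 <= Dt t x + H i (Dx i t s)) /\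
    (x = origin -> 0 <= Dt t origin + H0 N H (fun i => Dx i t 0)).

Definition subchar (N : nat) (e : nat -> R * R) (T : R) (H : nat -> R -> R)
    (u : R -> R * R -> R) : Prop :=
  forall phi Dt Dx, C1star N e T phi Dt Dx ->
    (forall t' y, inJT N e T t' y -> u t' y <= phi t' y) ->
  forall t x, inJT N e T t x -> u t x = phi t x ->
    (forall i s, inJstar N e i s x -> Dt t x + H i (Dx i t s) <= 0) /\
    (x = origin ->
       (exists i, (i < N)%nat /\ Dt t origin + H i (Dx i t 0) <= 0) \/
       Dt t origin + H0 N H (fun i => Dx i t 0) <= 0).

Definition superchar (N : nat) (e : nat -> R * R) (T : R) (H : nat -> R -> R)
    (u : R -> R * R -> R) : Prop :=
  forall phi Dt Dx, C1star N e T phi Dt Dx ->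
    (forall t' y, inJT N e T t' y -> phi t' y <= u t' y) ->
  forall t x, inJT N e T t x -> u t x = phi t x ->
    (forall i s, inJstar N e i s x -> 0 <= Dt t x + H i (Dx i t s)) /\
    (x = origin ->
       (exists i, (i < N)%nat /\ 0 <= Dt t origin + H i (Dx i t 0)) \/
       0 <= Dt t origin + H0 N H (fun i => Dx i t 0)).

(* Main.v *)
Require Import Defs.
From Stdlib Require Import Reals Lra Lia ZArith Classical ClassicalEpsilon.
Open Scope R_scope.

Lemma normR2_pt (e : nat -> R * R) k s : normR2 (e k) = 1 -> 0 <= s -> normR2 (pt e k s) = s.
Proof.
  unfold normR2, pt; cbn [fst snd]; intros H Hs.
  replace ((s * fst (e k)) ^ 2 + (s * snd (e k)) ^ 2) with (s^2 * (fst (e k) ^ 2 + snd (e k) ^ 2)) by ring.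
  rewrite sqrt_mult_alt by nra. rewrite H. rewrite <- (Rsqr_pow2 s) . rewrite sqrt_Rsqr; lra.
Qed.

Lemma pt0 (e : nat -> R * R) k : pt e k 0 = origin.
Proof. unfold pt, origin; f_equal; ring. Qed.

Lemma pt_inj N e k k' s s' : junction_dirs N e -> (k < N)%nat -> (k' < N)%nat -> 0 < s -> 0 < s' ->
  pt e k s = pt e k' s' -> k = k' /\ s = s'.
Proof.
  intros [HN [Hu Hd]] Hk Hk' Hs Hs' Heq.
  assert (ss : s = s').
  { rewrite <- (normR2_pt e k s), <- (normR2_pt e k' s'); try rewrite Heq; auto; lra. }
  subst s'. split; auto.
  destruct (Nat.eq_dec k k') as [|Hne]; auto. exfalso. apply (Hd k k' Hk Hk' Hne).
  unfold pt in Heq. injection Heq as H1 H2.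
  destruct (e k) as [a b]; destruct (e k') as [c d]; simpl in *.
  f_equal; apply Rmult_eq_reg_l with s; lra.
Qed.

Lemma norm_sub_pt (e : nat -> R * R) k a b : normR2 (e k) = 1 ->
  normR2 (subR2 (pt e k a) (pt e k b)) = Rabs (a - b).
Proof.
  unfold normR2, subR2, pt; cbn [fst snd]; intros H.
  replace ((a * fst (e k) - b * fst (e k)) ^ 2 + (a * snd (e k) - b * snd (e k)) ^ 2)
    with ((a-b)^2 * (fst (e k) ^ 2 + snd (e k) ^ 2)) by ring.
  rewrite sqrt_mult_alt by apply pow2_ge_0. rewrite H. rewrite <- (Rsqr_pow2 (a-b)), Rmult_1_r.
  apply sqrt_Rsqr_abs.
Qed.

Lemma normR2_sub_origin_l x : normR2 (subR2 origin x) = normR2 x.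
Proof. unfold normR2, subR2, origin; cbn [fst snd]. f_equal; ring. Qed.
Lemma normR2_sub_origin_r x : normR2 (subR2 x origin) = normR2 x.
Proof. unfold normR2, subR2, origin; cbn [fst snd]. f_equal; ring. Qed.

Lemma dJ_branch N e k m a b : junction_dirs N e -> (k < N)%nat -> (m < N)%nat -> 0 <= a -> 0 <= b ->
  dJ N e (pt e k a) (pt e m b) = if Nat.eq_dec k m then Rabs (a - b) else a + b.
Proof.
  intros HJ Hk Hm Ha Hb. pose proof HJ as [HN [Hu Hd]].
  unfold dJ. destruct (ClassicalDescription.excluded_middle_informative (sameBranch N e (pt e k a) (pt e m b))) as [Hs|Hs];
  destruct (Nat.eq_dec k m) as [<-|Hne].
  - apply norm_sub_pt; auto.
  - destruct Hs as [i [a' [b' [Hi [Ha' [Hb' [E1 E2]]]]]]].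
    assert (a = 0 \/ b = 0).
    { destruct (Req_dec a 0); auto. destruct (Req_dec b 0); auto.
      exfalso. destruct (Req_dec a' 0) as [->|].
      { rewrite pt0 in E1. rewrite <- (pt0 e k) in E1.
        rewrite <- (normR2_pt e k a), E1, pt0 in H; auto. apply H. rewrite <- (pt0 e k). apply normR2_pt; auto; lra. }
      destruct (Req_dec b' 0) as [->|].
      { rewrite <- (normR2_pt e m b), E2, pt0 in H0; auto. apply H0. rewrite <- (pt0 e k). apply normR2_pt; auto; lra. }
      destruct (pt_inj N e k i a a') as [-> _]; auto; try lra.
      destruct (pt_inj N e m i b b') as [-> _]; auto; lra. }
    destruct H as [->| ->]; rewrite pt0.
    + rewrite normR2_sub_origin_l, normR2_pt; auto; lra.
    + rewrite normR2_sub_origin_r, normR2_pt; auto; lra.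
  - exfalso; apply Hs. exists k, a, b. auto.
  - rewrite normR2_pt, normR2_pt; auto.
Qed.


Lemma cont_eps f x : continuity_pt f x -> forall eps, 0 < eps ->
  exists d, 0 < d /\ forall y, Rabs (y - x) < d -> Rabs (f y - f x) < eps.
Proof.
  intros Hc eps He. destruct (Hc eps He) as [d [Hd H]]. exists d; split; auto.
  intros y Hy. destruct (Req_dec y x) as [->|Hne].
  - unfold Rminus; rewrite Rplus_opp_r, Rabs_R0; auto.
  - apply (H y). split; [split; [exact I|exact (not_eq_sym Hne)]|exact Hy].
Qed.

Lemma eps_cont f x : (forall eps, 0 < eps ->
  exists d, 0 < d /\ forall y, Rabs (y - x) < d -> Rabs (f y - f x) < eps) -> continuity_pt f x.
Proof.
  intros H eps He. destruct (H eps He) as [d [Hd H']]. exists d; split; auto.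
  intros y [_ Hy]. apply H'. exact Hy.
Qed.

Lemma deriv_bound f x l : derivable_pt_lim f x l -> forall eps, 0 < eps ->
  exists d, 0 < d /\ forall y, Rabs (y - x) < d -> Rabs (f y - f x - l * (y - x)) <= eps * Rabs (y - x).
Proof.
  intros Hd eps He. destruct (Hd eps He) as [d H]. exists d; split; [apply cond_pos|].
  intros y Hy. destruct (Req_dec y x) as [->|Hne].
  - replace (f x - f x - l * (x - x)) with 0 by ring. rewrite Rabs_R0, Rminus_diag, Rabs_R0; lra.
  - assert (Hh : y - x <> 0) by lra. specialize (H (y - x) Hh Hy).
    replace (x + (y - x)) with y in H by ring.
    replace (f y - f x - l * (y - x)) with (((f y - f x) / (y - x) - l) * (y - x)) by (field; auto).
    rewrite Rabs_mult. apply Rmult_le_compat_r; [apply Rabs_pos|lra].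
Qed.

Lemma cont_HS_ext T f g : (forall t s, inHS T t s -> f t s = g t s) -> cont_HS T g -> cont_HS T f.
Proof.
  intros E H t s Hts eps He. destruct (H t s Hts eps He) as [d [Hd H']].
  exists d; split; auto. intros t' s' Hts' H1 H2. rewrite !E; auto.
Qed.

Lemma cont_HS_plus T f g : cont_HS T f -> cont_HS T g -> cont_HS T (fun t s => f t s + g t s).
Proof.
  intros Hf Hg t s Hts eps He.
  destruct (Hf t s Hts (eps/2)) as [d1 [Hd1 H1]]; [lra|].
  destruct (Hg t s Hts (eps/2)) as [d2 [Hd2 H2]]; [lra|].
  exists (Rmin d1 d2); split; [apply Rmin_glb_lt; auto|].
  intros t' s' Hts' Ht Hs.
  assert (A1 := Rmin_l d1 d2). assert (A2 := Rmin_r d1 d2).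
  specialize (H1 t' s' Hts' ltac:(lra) ltac:(lra)). specialize (H2 t' s' Hts' ltac:(lra) ltac:(lra)).
  replace (f t' s' + g t' s' - (f t s + g t s)) with ((f t' s' - f t s) + (g t' s' - g t s)) by ring.
  eapply Rle_lt_trans; [apply Rabs_triang|]. lra.
Qed.

Lemma cont_HS_opp T f : cont_HS T f -> cont_HS T (fun t s => - f t s).
Proof.
  intros Hf t s Hts eps He. destruct (Hf t s Hts eps He) as [d [Hd H]].
  exists d; split; auto. intros t' s' Hts' H1 H2.
  replace (- f t' s' - - f t s) with (- (f t' s' - f t s)) by ring. rewrite Rabs_Ropp; auto.
Qed.

Lemma cont_HS_t T F : (forall t, 0 < t < T -> continuity_pt F t) -> cont_HS T (fun t _ => F t).
Proof.
  intros Hc t s [Ht _] eps He. destruct (cont_eps F t (Hc t Ht) eps He) as [d [Hd H]].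
  exists d; split; auto.
Qed.

Lemma cont_HS_s T h : (forall s, continuity_pt h s) -> cont_HS T (fun _ s => h s).
Proof.
  intros Hc t s _ eps He. destruct (cont_eps h s (Hc s) eps He) as [d [Hd H]].
  exists d; split; auto.
Qed.

Lemma cont_HS_const T c : cont_HS T (fun _ _ => c).
Proof. intros t s _ eps He. exists 1; split; [lra|]. intros. unfold Rminus; rewrite Rplus_opp_r, Rabs_R0; auto. Qed.

Lemma C1_HS_ext T f ft fs g gt gs :
  (forall t s, inHS T t s -> f t s = g t s) ->
  (forall t s, inHS T t s -> ft t s = gt t s) ->
  (forall t s, inHS T t s -> fs t s = gs t s) ->
  C1_HS T g gt gs -> C1_HS T f ft fs.
Proof.
  intros E1 E2 E3 [H1 [H2 H3]]. split; [|split].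
  - eapply cont_HS_ext; eauto.
  - eapply cont_HS_ext; eauto.
  - intros t s Hts eps He. destruct (H3 t s Hts eps He) as [d [Hd H]].
    exists d; split; auto. intros t' s' Hts' Ht Hs. rewrite E1, E1, E2, E3; auto.
Qed.

Lemma C1_HS_plus T f ft fs g gt gs : C1_HS T f ft fs -> C1_HS T g gt gs ->
  C1_HS T (fun t s => f t s + g t s) (fun t s => ft t s + gt t s) (fun t s => fs t s + gs t s).
Proof.
  intros [A1 [A2 A3]] [B1 [B2 B3]]. split; [|split]; try (apply cont_HS_plus; auto).
  intros t s Hts eps He.
  destruct (A3 t s Hts (eps/2)) as [d1 [Hd1 H1]]; [lra|].
  destruct (B3 t s Hts (eps/2)) as [d2 [Hd2 H2]]; [lra|].
  exists (Rmin d1 d2); split; [apply Rmin_glb_lt; auto|].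
  intros t' s' Hts' Ht Hs.
  assert (M1 := Rmin_l d1 d2). assert (M2 := Rmin_r d1 d2).
  specialize (H1 t' s' Hts' ltac:(lra) ltac:(lra)). specialize (H2 t' s' Hts' ltac:(lra) ltac:(lra)).
  match goal with |- Rabs ?X <= _ => replace X with
    ((f t' s' - f t s - ft t s * (t' - t) - fs t s * (s' - s)) +
     (g t' s' - g t s - gt t s * (t' - t) - gs t s * (s' - s))) by ring end.
  eapply Rle_trans; [apply Rabs_triang|]. lra.
Qed.

Lemma C1_HS_opp T f ft fs : C1_HS T f ft fs ->
  C1_HS T (fun t s => - f t s) (fun t s => - ft t s) (fun t s => - fs t s).
Proof.
  intros [A1 [A2 A3]]. split; [|split]; try (apply cont_HS_opp; auto).
  intros t s Hts eps He. destruct (A3 t s Hts eps He) as [d [Hd H]].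
  exists d; split; auto. intros t' s' Hts' Ht Hs.
  match goal with |- Rabs ?X <= _ => replace X with
    (- (f t' s' - f t s - ft t s * (t' - t) - fs t s * (s' - s))) by ring end.
  rewrite Rabs_Ropp; auto.
Qed.

Lemma C1_HS_t T F F' : (forall t, 0 < t < T -> derivable_pt_lim F t (F' t)) ->
  (forall t, 0 < t < T -> continuity_pt F' t) ->
  C1_HS T (fun t _ => F t) (fun t _ => F' t) (fun _ _ => 0).
Proof.
  intros Hd Hc. split; [|split].
  - apply cont_HS_t; auto.
  - apply cont_HS_const.
  - intros t s [Ht _] eps He. destruct (deriv_bound F t (F' t) (Hd t Ht) eps He) as [d [Hd0 H]].
    exists d; split; auto. intros t' s' _ H1 H2.
    specialize (H t' H1). replace (F t' - F t - F' t * (t' - t) - 0 * (s' - s)) with (F t' - F t - F' t * (t' - t)) by ring.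
    assert (0 <= eps * Rabs (s' - s)) by (apply Rmult_le_pos; [lra|apply Rabs_pos]). nra.
Qed.

Lemma C1_HS_s T h h' : (forall s, derivable_pt_lim h s (h' s)) ->
  (forall s, continuity_pt h' s) ->
  C1_HS T (fun _ s => h s) (fun _ _ => 0) (fun _ s => h' s).
Proof.
  intros Hd Hc. split; [|split].
  - apply cont_HS_const.
  - apply cont_HS_s; auto.
  - intros t s _ eps He. destruct (deriv_bound h s (h' s) (Hd s) eps He) as [d [Hd0 H]].
    exists d; split; auto. intros t' s' _ H1 H2.
    specialize (H s' H2). replace (h s' - h s - 0 * (t' - t) - h' s * (s' - s)) with (h s' - h s - h' s * (s' - s)) by ring.
    assert (0 <= eps * Rabs (t' - t)) by (apply Rmult_le_pos; [lra|apply Rabs_pos]). nra.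
Qed.

Lemma fin_min (P : nat -> R -> Prop) n :
  (forall m d d', 0 < d' <= d -> P m d -> P m d') ->
  (forall m, (m < n)%nat -> exists d, 0 < d /\ P m d) ->
  exists d, 0 < d /\ forall m, (m < n)%nat -> P m d.
Proof.
  intros Hmon. induction n as [|n IH]; intros Hall.
  - exists 1; split; [lra|]. intros; lia.
  - destruct IH as [d1 [Hd1 H1]]. { intros m Hm; apply Hall; lia. }
    destruct (Hall n) as [d2 [Hd2 H2]]; [lia|].
    exists (Rmin d1 d2); split; [apply Rmin_glb_lt; auto|].
    assert (M1 := Rmin_l d1 d2). assert (M2 := Rmin_r d1 d2).
    assert (0 < Rmin d1 d2) by (apply Rmin_glb_lt; auto).
    intros m Hm. destruct (Nat.eq_dec m n) as [->|].
    + apply Hmon with d2; auto; lra.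
    + apply Hmon with d1; [lra|]. apply H1; lia.
Qed.

Lemma fin_max (P : nat -> R -> Prop) n :
  (forall m M M', M <= M' -> P m M -> P m M') ->
  (forall m, (m < n)%nat -> exists M, P m M) ->
  exists M, forall m, (m < n)%nat -> P m M.
Proof.
  intros Hmon. induction n as [|n IH]; intros Hall.
  - exists 0. intros; lia.
  - destruct IH as [M1 H1]. { intros m Hm; apply Hall; lia. }
    destruct (Hall n) as [M2 H2]; [lia|].
    exists (Rmax M1 M2). intros m Hm. destruct (Nat.eq_dec m n) as [->|].
    + apply Hmon with M2; auto. apply Rmax_r.
    + apply Hmon with M1; [apply Rmax_l|]. apply H1; lia.
Qed.

Lemma inJT_dec N e T t x : inJT N e T t x -> exists k s, (k < N)%nat /\ 0 <= s /\ x = pt e k s /\ 0 < t < T.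
Proof. intros [Ht [k [s [Hk [Hs ->]]]]]. exists k, s; auto. Qed.

Lemma cont_JT_branch N e T g : junction_dirs N e ->
  (forall k, (k < N)%nat -> cont_HS T (fun t s => g t (pt e k s))) -> cont_JT N e T g.
Proof.
  intros HJ Hb t x Hx eps He.
  destruct (inJT_dec _ _ _ _ _ Hx) as [k [s [Hk [Hs [-> Ht]]]]].
  destruct (Rle_lt_or_eq_dec 0 s Hs) as [Hsp|<-].
  - destruct (Hb k Hk t s (conj Ht Hs) eps He) as [d [Hd H]].
    exists (Rmin d s); split; [apply Rmin_glb_lt; auto|].
    intros t' y [Hy [H1 H2]].
    destruct (inJT_dec _ _ _ _ _ Hy) as [m [s' [Hm [Hs' [-> Ht']]]]].
    rewrite dJ_branch in H2; auto.
    assert (M1 := Rmin_l d s). assert (M2 := Rmin_r d s).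
    destruct (Nat.eq_dec k m) as [<-|]; [|lra].
    apply H; auto. split; auto. lra. rewrite Rabs_minus_sym; lra.
  - destruct (fin_min (fun m d => forall t' s', inHS T t' s' -> Rabs (t' - t) < d -> Rabs (s' - 0) < d ->
       Rabs (g t' (pt e m s') - g t (pt e m 0)) < eps) N) as [d [Hd H]].
    + intros m d d' Hdd Hm t' s' H1 H2 H3. apply Hm; auto; lra.
    + intros m Hm. apply (Hb m Hm t 0 (conj Ht (Rle_refl 0)) eps He).
    + exists d; split; auto. intros t' y [Hy [H1 H2]].
      destruct (inJT_dec _ _ _ _ _ Hy) as [m [s' [Hm [Hs' [-> Ht']]]]].
      rewrite dJ_branch in H2; auto; try lra.
      rewrite (pt0 e k), <- (pt0 e m). apply H; auto. split; auto.
      destruct (Nat.eq_dec k m); rewrite Rminus_0_r, Rabs_right; try lra.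
      rewrite Rabs_minus_sym, Rminus_0_r, Rabs_right in H2; lra.
Qed.

Lemma cont_JT_plus N e T f g : cont_JT N e T f -> cont_JT N e T g -> cont_JT N e T (fun t x => f t x + g t x).
Proof.
  intros Hf Hg t x Hx eps He.
  destruct (Hf t x Hx (eps/2)) as [d1 [Hd1 H1]]; [lra|].
  destruct (Hg t x Hx (eps/2)) as [d2 [Hd2 H2]]; [lra|].
  exists (Rmin d1 d2); split; [apply Rmin_glb_lt; auto|].
  assert (M1 := Rmin_l d1 d2). assert (M2 := Rmin_r d1 d2).
  intros t' y [Hy [A B]].
  assert (BH1 : inBallJT N e T t x d1 t' y) by (split; [auto|split; lra]). specialize (H1 t' y BH1).
  assert (BH2 : inBallJT N e T t x d2 t' y) by (split; [auto|split; lra]). specialize (H2 t' y BH2).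
  replace (f t' y + g t' y - (f t x + g t x)) with ((f t' y - f t x) + (g t' y - g t x)) by ring.
  eapply Rle_lt_trans; [apply Rabs_triang|]. lra.
Qed.

Lemma cont_JT_opp N e T f : cont_JT N e T f -> cont_JT N e T (fun t x => - f t x).
Proof.
  intros Hf t x Hx eps He. destruct (Hf t x Hx eps He) as [d [Hd H]].
  exists d; split; auto. intros t' y Hb.
  replace (- f t' y - - f t x) with (- (f t' y - f t x)) by ring. rewrite Rabs_Ropp; auto.
Qed.

Lemma C1star_plus N e T f ft fx g gt gx : C1star N e T f ft fx -> C1star N e T g gt gx ->
  C1star N e T (fun t x => f t x + g t x) (fun t x => ft t x + gt t x) (fun k t s => fx k t s + gx k t s).
Proof.
  intros [A1 A2] [B1 B2]. split; [apply cont_JT_plus; auto|].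
  intros i Hi. apply (C1_HS_plus T _ _ _ _ _ _ (A2 i Hi) (B2 i Hi)).
Qed.

Lemma C1star_opp N e T f ft fx : C1star N e T f ft fx ->
  C1star N e T (fun t x => - f t x) (fun t x => - ft t x) (fun k t s => - fx k t s).
Proof.
  intros [A1 A2]. split; [apply cont_JT_opp; auto|].
  intros i Hi. apply (C1_HS_opp T _ _ _ (A2 i Hi)).
Qed.

Lemma usc_minus N e T u phi : usc_JT N e T u -> cont_JT N e T phi -> usc_JT N e T (fun t x => u t x - phi t x).
Proof.
  intros Hu Hp t x Hx eps He.
  destruct (Hu t x Hx (eps/2)) as [d1 [Hd1 H1]]; [lra|].
  destruct (Hp t x Hx (eps/2)) as [d2 [Hd2 H2]]; [lra|].
  exists (Rmin d1 d2); split; [apply Rmin_glb_lt; auto|].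
  assert (M1 := Rmin_l d1 d2). assert (M2 := Rmin_r d1 d2).
  intros t' y [Hy [A B]].
  assert (BH1 : inBallJT N e T t x d1 t' y) by (split; [auto|split; lra]). specialize (H1 t' y BH1).
  assert (BH2 : inBallJT N e T t x d2 t' y) by (split; [auto|split; lra]). specialize (H2 t' y BH2).
  apply Rabs_def2 in H2. lra.
Qed.

Lemma usc_of_lsc N e T u : lsc_JT N e T u -> usc_JT N e T (fun t x => - u t x).
Proof.
  intros Hu t x Hx eps He. destruct (Hu t x Hx eps He) as [d [Hd H]].
  exists d; split; auto. intros t' y Hb. specialize (H t' y Hb). lra.
Qed.


Lemma cover (a b : R) (G : R -> R -> R -> Prop) : a <= b ->
  (forall d d' M M' y, 0 < d' <= d -> M <= M' -> G d M y -> G d' M' y) ->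
  (forall x, a <= x <= b -> exists r d M, 0 < r /\ 0 < d /\
       forall y, a <= y <= b -> Rabs (y - x) < r -> G d M y) ->
  exists d M, 0 < d /\ forall y, a <= y <= b -> G d M y.
Proof.
  intros Hab Hmon Hloc.
  set (S := fun c => a <= c <= b /\ exists d M, 0 < d /\ forall y, a <= y <= c -> G d M y).
  assert (Sa : S a).
  { destruct (Hloc a (conj (Rle_refl a) Hab)) as [r [d [M [Hr [Hd H]]]]].
    split; [lra|]. exists d, M; split; auto. intros y Hy. apply H; [lra|].
    replace (y - a) with 0 by lra. rewrite Rabs_R0; lra. }
  assert (Bd : bound S) by (exists b; intros c [Hc _]; lra).
  destruct (completeness S Bd (ex_intro _ a Sa)) as [c [Hub Hlub]].
  assert (Hac : a <= c) by (apply Hub; auto).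
  assert (Hcb : c <= b) by (apply Hlub; intros x [Hx _]; lra).
  destruct (Hloc c (conj Hac Hcb)) as [r [d1 [M1 [Hr [Hd1 H1]]]]].
  assert (Ex : exists c1, S c1 /\ c - r < c1).
  { apply NNPP; intro Hn. assert (c <= c - r); [|lra].
    apply Hlub. intros x Hx. apply Rnot_lt_le. intro Hlt. apply Hn. exists x; auto. }
  destruct Ex as [c1 [[Hc1 [d2 [M2 [Hd2 H2]]]] Hc1r]].
  assert (Hc1c : c1 <= c) by (apply Hub; split; auto; exists d2, M2; auto).
  set (c' := Rmin b (c + r/2)).
  assert (Sc' : S c').
  { split. { unfold c'. split; [apply Rmin_glb; lra|apply Rmin_l]. }
    exists (Rmin d1 d2), (Rmax M1 M2). split; [apply Rmin_glb_lt; auto|].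
    assert (0 < Rmin d1 d2) by (apply Rmin_glb_lt; auto).
    intros y Hy. destruct (Rle_dec y c1).
    - apply Hmon with d2 M2; [split; auto; apply Rmin_r|apply Rmax_r|]. apply H2; lra.
    - apply Hmon with d1 M1; [split; auto; apply Rmin_l|apply Rmax_l|].
      assert (y <= c + r/2) by (unfold c' in Hy; destruct Hy as [_ Hy]; eapply Rle_trans; [apply Hy|apply Rmin_r]).
      assert (y <= b) by (unfold c' in Hy; destruct Hy as [_ Hy]; eapply Rle_trans; [apply Hy|apply Rmin_l]).
      apply H1; [lra|]. apply Rabs_def1; lra. }
  assert (c' <= c) by (apply Hub; auto).
  assert (Hc'b : c' = b).
  { unfold c' in *. revert H. apply Rmin_case_strong; intros; lra. }
  destruct Sc' as [_ [d [M [Hd Hf]]]]. exists d, M; split; auto.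
  intros y Hy; apply Hf; lra.
Qed.

Definition usc_HS (T : R) (f : R -> R -> R) : Prop :=
  forall t s, inHS T t s -> forall eps, 0 < eps -> exists d, 0 < d /\
    forall t' s', inHS T t' s' -> Rabs (t' - t) < d -> Rabs (s' - s) < d -> f t' s' < f t s + eps.

Lemma rect_bound T f a b R : usc_HS T f -> 0 < a -> a <= b -> b < T -> 0 <= R ->
  exists M, forall t s, a <= t <= b -> 0 <= s <= R -> f t s <= M.
Proof.
  intros Hf Ha Hab Hb HR.
  assert (Tube : forall t0, 0 < t0 < T -> exists d M, 0 < d /\ forall s, 0 <= s <= R ->
             forall t, 0 < t < T -> Rabs (t - t0) < d -> f t s <= M).
  { intros t0 Ht0.
    apply (cover 0 R (fun d M s => forall t, 0 < t < T -> Rabs (t - t0) < d -> f t s <= M)); auto.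
    - intros d d' M M' y Hd HM H t Ht Htd. apply Rle_trans with M; auto. apply H; auto; lra.
    - intros x Hx. destruct (Hf t0 x (conj Ht0 (proj1 Hx)) 1) as [d [Hd H]]; [lra|].
      exists d, d, (f t0 x + 1). split; auto; split; auto. intros y Hy Hyx t Ht Htd.
      left. apply H; auto. split; auto; lra. }
  destruct (cover a b (fun _ M t => forall s, 0 <= s <= R -> f t s <= M)) as [_ [M [_ HM]]]; auto.
  - intros d d' M M' y _ HMM H s Hs. apply Rle_trans with M; auto.
  - intros x Hx. destruct (Tube x ltac:(lra)) as [d [M [Hd H]]].
    exists d, 1, M. split; auto; split; [lra|]. intros y Hy Hyx s Hs. apply H; auto; lra.
  - exists M. intros t s Ht Hs. apply HM; auto.
Qed.

Lemma JT_bound N e T v a b R : junction_dirs N e -> usc_JT N e T v -> 0 < a -> a <= b -> b < T -> 0 <= R ->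
  exists M, forall k t s, (k < N)%nat -> a <= t <= b -> 0 <= s <= R -> v t (pt e k s) <= M.
Proof.
  intros HJ Hv Ha Hab Hb HR.
  destruct (fin_max (fun k M => forall t s, a <= t <= b -> 0 <= s <= R -> v t (pt e k s) <= M) N) as [M HM].
  - intros m M M' HMM H t s Ht Hs. apply Rle_trans with M; auto.
  - intros k Hk. apply (rect_bound T (fun t s => v t (pt e k s))); auto.
    intros t s [Ht Hs] eps He.
    assert (Hx : inJT N e T t (pt e k s)) by (split; auto; exists k, s; auto).
    destruct (Hv t (pt e k s) Hx eps He) as [d [Hd H]].
    exists d; split; auto. intros t' s' [Ht' Hs'] H1 H2. apply H.
    split; [split; auto; exists k, s'; auto|split; auto].
    rewrite dJ_branch; auto. destruct (Nat.eq_dec k k) as [_|]; [|lia]. rewrite Rabs_minus_sym; auto.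
  - exists M. intros k t s Hk. apply HM; auto.
Qed.


Definition mp (y : R) := (y + Rabs y) / 2.
Definition sg (y : R) := mp y * mp y.
Definition dsg (y : R) := 2 * mp y.

Lemma mp_cases y : (y <= 0 /\ mp y = 0) \/ (0 < y /\ mp y = y).
Proof. unfold mp. destruct (Rle_dec y 0).
  - left; rewrite Rabs_left1; [split; [auto|lra]|auto].
  - right; rewrite Rabs_right; lra. Qed.

Lemma sg_bound y h : Rabs (sg (y + h) - sg y - dsg y * h) <= h * h.
Proof.
  unfold sg, dsg. destruct (mp_cases y) as [[A ->]|[A ->]]; destruct (mp_cases (y+h)) as [[B ->]|[B ->]].
  - rewrite Rabs_right; nra.
  - rewrite Rabs_right; nra.
  - rewrite Rabs_right; nra.
  - rewrite Rabs_right; nra.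
Qed.

Lemma dsg_lip a b : Rabs (dsg a - dsg b) <= 2 * Rabs (a - b).
Proof.
  unfold dsg. destruct (mp_cases a) as [[A ->]|[A ->]]; destruct (mp_cases b) as [[B ->]|[B ->]].
  - rewrite Rminus_diag, Rabs_R0. assert (0 <= Rabs (a-b)) by apply Rabs_pos. lra.
  - rewrite (Rabs_left1 (a - b)) by lra. rewrite Rabs_left1; lra.
  - rewrite (Rabs_right (a - b)) by lra. rewrite Rabs_right; lra.
  - replace (2 * a - 2 * b) with (2 * (a - b)) by ring. rewrite Rabs_mult, Rabs_right; lra.
Qed.

Lemma sg_nonneg y : 0 <= sg y.
Proof. unfold sg. apply Rle_0_sqr. Qed.
Lemma sg_zero y : y <= 0 -> sg y = 0 /\ dsg y = 0.
Proof. intros H. unfold sg, dsg. destruct (mp_cases y) as [[_ ->]|[A _]]; [split; ring|lra]. Qed.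
Lemma sg_ge1 y : 1 <= y -> 1 <= sg y.
Proof. intros H. unfold sg. destruct (mp_cases y) as [[A _]|[_ ->]]; [lra|nra]. Qed.

Section Gam.
Variable c : nat -> R.
Fixpoint SG (n : nat) (y : R) : R :=
  match n with O => c 0 * sg (y - INR 0) | S m => SG m y + c (S m) * sg (y - INR (S m)) end.
Fixpoint DSG (n : nat) (y : R) : R :=
  match n with O => c 0 * dsg (y - INR 0) | S m => DSG m y + c (S m) * dsg (y - INR (S m)) end.
Fixpoint CS (n : nat) : R :=
  match n with O => Rabs (c 0) | S m => CS m + Rabs (c (S m)) end.

Lemma CS_nonneg n : 0 <= CS n.
Proof. induction n; simpl; [apply Rabs_pos|]. assert (0 <= Rabs (c (S n))) by apply Rabs_pos. lra. Qed.

Lemma term_bound k y h : Rabs (c k * sg (y + h - INR k) - c k * sg (y - INR k) - c k * dsg (y - INR k) * h)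
   <= Rabs (c k) * (h * h).
Proof.
  replace (c k * sg (y + h - INR k) - c k * sg (y - INR k) - c k * dsg (y - INR k) * h)
    with (c k * (sg ((y - INR k) + h) - sg (y - INR k) - dsg (y - INR k) * h)) by (replace (y - INR k + h) with (y + h - INR k) by ring; ring).
  rewrite Rabs_mult. apply Rmult_le_compat_l; [apply Rabs_pos|apply sg_bound].
Qed.

Lemma SG_bound n y h : Rabs (SG n (y + h) - SG n y - DSG n y * h) <= CS n * (h * h).
Proof.
  induction n as [|n IH]; cbn [SG DSG CS].
  - apply term_bound.
  - replace (SG n (y + h) + c (S n) * sg (y + h - INR (S n)) - (SG n y + c (S n) * sg (y - INR (S n))) -
      (DSG n y + c (S n) * dsg (y - INR (S n))) * h) with
      ((SG n (y + h) - SG n y - DSG n y * h) + (c (S n) * sg (y + h - INR (S n)) - c (S n) * sg (y - INR (S n)) - c (S n) * dsg (y - INR (S n)) * h)) by ring.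
    eapply Rle_trans; [apply Rabs_triang|]. pose proof (term_bound (S n) y h). nra.
Qed.

Lemma DSG_lip n a b : Rabs (DSG n a - DSG n b) <= 2 * CS n * Rabs (a - b).
Proof.
  assert (Tk : forall k, Rabs (c k * dsg (a - INR k) - c k * dsg (b - INR k)) <= 2 * Rabs (c k) * Rabs (a - b)).
  { intro k. rewrite <- Rmult_minus_distr_l, Rabs_mult.
    pose proof (dsg_lip (a - INR k) (b - INR k)). replace (a - INR k - (b - INR k)) with (a - b) in H by ring.
    pose proof (Rabs_pos (c k)). nra. }
  induction n as [|n IH]; cbn [SG DSG CS].
  - apply Tk.
  - replace (DSG n a + c (S n) * dsg (a - INR (S n)) - (DSG n b + c (S n) * dsg (b - INR (S n)))) with
     ((DSG n a - DSG n b) + (c (S n) * dsg (a - INR (S n)) - c (S n) * dsg (b - INR (S n)))) by ring.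
    eapply Rle_trans; [apply Rabs_triang|]. pose proof (Tk (S n)). nra.
Qed.

Lemma SG_stable M k y : y <= INR M -> SG (M + k) y = SG M y /\ DSG (M + k) y = DSG M y.
Proof.
  intros H. induction k as [|k IH].
  - rewrite Nat.add_0_r; auto.
  - rewrite Nat.add_succ_r. cbn [SG DSG]. destruct IH as [-> ->].
    destruct (sg_zero (y - INR (S (M + k)))) as [-> ->].
    + rewrite S_INR, plus_INR. pose proof (pos_INR k). lra.
    + split; ring.
Qed.

Lemma SG_eq M M' y : y <= INR M -> y <= INR M' -> SG M y = SG M' y /\ DSG M y = DSG M' y.
Proof.
  intros H H'. destruct (Nat.le_ge_cases M M') as [L|L].
  - replace M' with (M + (M' - M))%nat by lia. destruct (SG_stable M (M' - M) y H) as [-> ->]; auto.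
  - replace M with (M' + (M - M'))%nat by lia. destruct (SG_stable M' (M - M') y H') as [-> ->]; auto.
Qed.

Definition Kn (y : R) : nat := Z.to_nat (up y).
Lemma Kn_ge y : y <= INR (Kn y).
Proof.
  unfold Kn. destruct (archimed y) as [A _]. destruct (Z.lt_ge_cases (up y) 0) as [l|l].
  - replace (Z.to_nat (up y)) with 0%nat by (destruct (up y); simpl; lia). simpl. apply IZR_lt in l. lra.
  - rewrite INR_IZR_INZ, Z2Nat.id by lia. lra.
Qed.

Definition Gam (y : R) := SG (Kn y) y.
Definition DGam (y : R) := DSG (Kn y) y.

Lemma Gam_loc M y : y <= INR M -> Gam y = SG M y /\ DGam y = DSG M y.
Proof. intros H. unfold Gam, DGam. apply SG_eq; auto. apply Kn_ge. Qed.

Lemma Gam_deriv y : derivable_pt_lim Gam y (DGam y).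
Proof.
  intros eps He. set (M := Kn (y + 1)). pose proof (Kn_ge (y+1)) as HM. fold M in HM.
  pose proof (CS_nonneg M).
  assert (Hd : 0 < Rmin 1 (eps / (CS M + 1))) by (apply Rmin_glb_lt; [lra|apply Rdiv_lt_0_compat; lra]).
  exists (mkposreal _ Hd). intros h Hh Hlt. simpl in Hlt.
  pose proof (Rmin_l 1 (eps / (CS M + 1))). pose proof (Rmin_r 1 (eps / (CS M + 1))).
  assert (Ha : Rabs h < 1) by lra. apply Rabs_def2 in Ha.
  destruct (Gam_loc M (y + h)) as [-> _]; [lra|]. destruct (Gam_loc M y) as [-> ->]; [lra|].
  pose proof (SG_bound M y h).
  replace ((SG M (y + h) - SG M y) / h - DSG M y) with ((SG M (y + h) - SG M y - DSG M y * h) / h) by (field; auto).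
  unfold Rdiv. rewrite Rabs_mult, Rabs_inv.
  assert (0 < Rabs h) by (apply Rabs_pos_lt; auto).
  apply Rle_lt_trans with (CS M * (h * h) * / Rabs h).
  { apply Rmult_le_compat_r; auto. left; apply Rinv_0_lt_compat; auto. }
  assert (Hhh : h * h = Rabs h * Rabs h) by (rewrite <- Rabs_mult; symmetry; apply Rabs_right; nra).
  rewrite Hhh. replace (CS M * (Rabs h * Rabs h) * / Rabs h) with (CS M * Rabs h) by (field; lra).
  apply Rle_lt_trans with (CS M * (eps / (CS M + 1))). { apply Rmult_le_compat_l; lra. }
  apply Rlt_le_trans with ((CS M + 1) * (eps / (CS M + 1))); [|right; field; lra].
  apply Rmult_lt_compat_r; [apply Rdiv_lt_0_compat|]; lra.
Qed.

Lemma DGam_cont y : continuity_pt DGam y.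
Proof.
  apply eps_cont. intros eps He. set (M := Kn (y + 1)). pose proof (Kn_ge (y+1)) as HM. fold M in HM.
  pose proof (CS_nonneg M).
  exists (Rmin 1 (eps / (2 * CS M + 1))). split; [apply Rmin_glb_lt; [lra|apply Rdiv_lt_0_compat; lra]|].
  intros z Hz. pose proof (Rmin_l 1 (eps / (2 * CS M + 1))). pose proof (Rmin_r 1 (eps / (2 * CS M + 1))).
  assert (Ha : Rabs (z - y) < 1) by lra. apply Rabs_def2 in Ha.
  destruct (Gam_loc M z) as [_ ->]; [lra|]. destruct (Gam_loc M y) as [_ ->]; [lra|].
  eapply Rle_lt_trans; [apply DSG_lip|].
  apply Rle_lt_trans with (2 * CS M * (eps / (2 * CS M + 1))). { apply Rmult_le_compat_l; lra. }
  apply Rlt_le_trans with ((2 * CS M + 1) * (eps / (2 * CS M + 1))); [|right; field; lra].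
  apply Rmult_lt_compat_r; [apply Rdiv_lt_0_compat|]; lra.
Qed.

Lemma SG_zero n y : y <= 0 -> SG n y = 0 /\ DSG n y = 0.
Proof.
  intros H. induction n as [|n IH]; cbn [SG DSG].
  - destruct (sg_zero (y - INR 0)) as [-> ->]; [simpl; lra|split; ring].
  - destruct IH as [-> ->]. destruct (sg_zero (y - INR (S n))) as [-> ->]; [|split; ring].
    pose proof (pos_INR (S n)); lra.
Qed.

Lemma Gam_zero y : y <= 0 -> Gam y = 0 /\ DGam y = 0.
Proof. intros H. apply SG_zero; auto. Qed.

Hypothesis cpos : forall k, 0 <= c k.

Lemma SG_nonneg n y : 0 <= SG n y.
Proof.
  induction n; cbn [SG DSG CS]; [|pose proof (sg_nonneg (y - INR (S n))); pose proof (cpos (S n)); nra].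
  pose proof (sg_nonneg (y - INR 0)); pose proof (cpos 0); nra.
Qed.

Lemma SG_ge n M y : (n <= M)%nat -> c n * sg (y - INR n) <= SG M y.
Proof.
  induction M as [|M IH]; intros Hn.
  - replace n with 0%nat by lia. cbn [SG]. lra.
  - cbn [SG]. destruct (Nat.eq_dec n (S M)) as [->|Hne].
    + pose proof (SG_nonneg M y). lra.
    + pose proof (IH ltac:(lia)). pose proof (sg_nonneg (y - INR (S M))); pose proof (cpos (S M)). nra.
Qed.

Lemma Gam_nonneg y : 0 <= Gam y.
Proof. apply SG_nonneg. Qed.

Lemma Gam_ge n y : INR n + 1 <= y -> c n <= Gam y.
Proof.
  intros H. unfold Gam. pose proof (Kn_ge y).
  assert (n <= Kn y)%nat. { apply INR_le. lra. }
  pose proof (SG_ge n (Kn y) y H1). pose proof (sg_ge1 (y - INR n) ltac:(lra)). pose proof (cpos n). nra.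
Qed.
End Gam.

Lemma Gamma_exists (b : nat -> R) : exists (G G' : R -> R),
  (forall y, derivable_pt_lim G y (G' y)) /\ (forall y, continuity_pt G' y) /\ (forall y, y <= 0 -> G y = 0 /\ G' y = 0) /\ (forall y, 0 <= G y) /\ (forall n y, INR n + 1 <= y -> b n <= G y).
Proof.
  set (c := fun k => Rmax (b k) 0). assert (cpos : forall k, 0 <= c k) by (intro; apply Rmax_r).
  exists (Gam c), (DGam c). split; [|split; [|split; [|split]]].
  - apply Gam_deriv.
  - apply DGam_cont.
  - apply Gam_zero.
  - apply Gam_nonneg; auto.
  - intros n y H. apply Rle_trans with (c n); [apply Rmax_l|]. apply Gam_ge; auto.
Qed.


From Coquelicot Require Import Coquelicot.
Open Scope R_scope.

Lemma exd_cont (f : R -> R) x : ex_derive f x -> continuity_pt f x.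
Proof. intros H. apply continuity_pt_filterlim. exact (@ex_derive_continuous R_AbsRing R_NormedModule f x H). Qed.

Lemma dlim_cont f x l : derivable_pt_lim f x l -> continuity_pt f x.
Proof. intros H. apply derivable_continuous_pt. exists l. exact H. Qed.

Definition wf (t0 T t : R) := (t - t0)^2 * (/ t + / (T - t)).
Definition dwf (t0 T t : R) := 2*(t - t0) * (/t + /(T-t)) + (t - t0)^2 * (- / t^2 + / (T - t)^2).

Lemma wf_deriv t0 T t : 0 < t < T -> derivable_pt_lim (wf t0 T) t (dwf t0 T t).
Proof. intros. apply is_derive_Reals. unfold wf, dwf. auto_derive. repeat split; nra. field. split; lra. Qed.

Lemma dwf_cont t0 T t : 0 < t < T -> continuity_pt (dwf t0 T) t.
Proof. intros. apply exd_cont. unfold dwf. auto_derive. repeat split; nra. Qed.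

Lemma wf_t0 t0 T : wf t0 T t0 = 0.
Proof. unfold wf. ring. Qed.

Lemma wf_ge1 t0 T t : 0 < t < T -> (t - t0)^2 / t <= wf t0 T t.
Proof.
  intros Ht. unfold wf, Rdiv. assert (0 < / (T - t)) by (apply Rinv_0_lt_compat; lra).
  assert (0 <= (t - t0)^2) by apply pow2_ge_0. nra.
Qed.

Lemma wf_ge2 t0 T t : 0 < t < T -> (t - t0)^2 / (T - t) <= wf t0 T t.
Proof.
  intros Ht. unfold wf, Rdiv. assert (0 < / t) by (apply Rinv_0_lt_compat; lra).
  assert (0 <= (t - t0)^2) by apply pow2_ge_0. nra.
Qed.

Lemma wf_geT t0 T t : 0 < t < T -> (t - t0)^2 / T <= wf t0 T t.
Proof.
  intros Ht. eapply Rle_trans; [|apply wf_ge1; auto]. unfold Rdiv.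
  apply Rmult_le_compat_l; [apply pow2_ge_0|]. apply Rinv_le_contravar; lra.
Qed.

Definition aA (t0 A : R) := Rmin (t0/2) (t0^2 / (4 * (A + 1))).
Definition bA (t0 T A : R) := Rmax ((t0 + T)/2) (T - (T - t0)^2 / (4 * (A + 1))).

Lemma wf_bounds t0 T A t : 0 < t0 < T -> 0 <= A -> 0 < t < T -> wf t0 T t <= A ->
  aA t0 A <= t <= bA t0 T A.
Proof.
  intros Ht0 HA Ht Hw. split.
  - apply Rnot_lt_le. intro Hlt. unfold aA in Hlt.
    assert (H1 : t < t0/2) by (eapply Rlt_le_trans; [apply Hlt|apply Rmin_l]).
    assert (H2 : t < t0^2 / (4 * (A + 1))) by (eapply Rlt_le_trans; [apply Hlt|apply Rmin_r]).
    apply (Rmult_lt_compat_r (4 * (A+1))) in H2; [|lra].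
    replace (t0 ^ 2 / (4 * (A + 1)) * (4 * (A + 1))) with (t0^2) in H2 by (field; lra).
    pose proof (wf_ge1 t0 T t Ht).
    assert (H3 : (t - t0)^2 <= A * t).
    { assert (H4 : (t - t0)^2 / t <= A) by lra. apply (Rmult_le_compat_r t) in H4; [|lra].
      unfold Rdiv in H4. rewrite Rmult_assoc, Rinv_l in H4; lra. }
    assert ((t - t0)^2 > t0^2/4) by nra. nra.
  - apply Rnot_lt_le. intro Hlt. unfold bA in Hlt.
    assert (H1 : (t0 + T)/2 < t) by (eapply Rle_lt_trans; [apply Rmax_l|apply Hlt]).
    assert (H2 : T - (T - t0)^2 / (4 * (A + 1)) < t) by (eapply Rle_lt_trans; [apply Rmax_r|apply Hlt]).
    assert (H2' : 4 * (A + 1) * (T - t) < (T - t0)^2).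
    { assert (H4 : T - t < (T - t0)^2 / (4 * (A + 1))) by lra.
      apply (Rmult_lt_compat_l (4 * (A+1))) in H4; [|lra].
      replace (4 * (A + 1) * ((T - t0) ^ 2 / (4 * (A + 1)))) with ((T - t0)^2) in H4 by (field; lra). lra. }
    pose proof (wf_ge2 t0 T t Ht).
    assert (H3 : (t - t0)^2 <= A * (T - t)).
    { assert (H4 : (t - t0)^2 / (T - t) <= A) by lra. apply (Rmult_le_compat_r (T - t)) in H4; [|lra].
      unfold Rdiv in H4. rewrite Rmult_assoc, Rinv_l in H4; lra. }
    assert ((t - t0)^2 > (T - t0)^2/4) by nra. nra.
Qed.

Lemma aA_pos t0 A : 0 < t0 -> 0 <= A -> 0 < aA t0 A.
Proof. intros. unfold aA. apply Rmin_glb_lt; [lra|]. apply Rdiv_lt_0_compat; nra. Qed.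
Lemma aA_le_bA t0 T A : 0 < t0 < T -> 0 <= A -> aA t0 A <= bA t0 T A.
Proof. intros. unfold aA, bA. eapply Rle_trans; [apply Rmin_l|]. eapply Rle_trans; [|apply Rmax_l]. lra. Qed.
Lemma bA_lt t0 T A : 0 < t0 < T -> 0 <= A -> bA t0 T A < T.
Proof. intros. unfold bA. apply Rmax_lub_lt; [lra|].
  assert (0 < (T - t0)^2 / (4 * (A + 1))) by (apply Rdiv_lt_0_compat; nra). lra. Qed.

Lemma index_ex y : exists n, y < INR n + 2 /\ (1 <= y -> INR n + 1 <= y) /\ (y < 1 -> n = 0%nat).
Proof.
  destruct (Rlt_le_dec y 1) as [Hy|Hy].
  - exists 0%nat. simpl. repeat split; intros; lra.
  - destruct (archimed y) as [A B].
    assert (Hu : (2 <= up y)%Z). { assert (1 < IZR (up y)) by lra. apply lt_IZR in H. lia. }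
    exists (Z.to_nat (up y - 2)). rewrite INR_IZR_INZ, Z2Nat.id by lia. rewrite minus_IZR.
    repeat split; intros; lra.
Qed.


Definition qf (i0 : nat) (s0 : R) (k : nat) (s : R) :=
  if Nat.eq_dec i0 k then (s0 - s)^2 else (s0 + s)^2.
Definition dqf (i0 : nat) (s0 : R) (k : nat) (s : R) :=
  if Nat.eq_dec i0 k then -2*(s0 - s) else 2*(s0 + s).

Lemma qf_dJ N e i0 s0 k s : junction_dirs N e -> (i0 < N)%nat -> (k < N)%nat -> 0 <= s0 -> 0 <= s ->
  (dJ N e (pt e i0 s0) (pt e k s))^2 = qf i0 s0 k s.
Proof. intros. rewrite dJ_branch; auto. unfold qf; destruct Nat.eq_dec; auto. apply pow2_abs. Qed.

Lemma dJ_self N e i0 s0 : junction_dirs N e -> (i0 < N)%nat -> 0 <= s0 -> dJ N e (pt e i0 s0) (pt e i0 s0) = 0.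
Proof. intros. rewrite dJ_branch; auto. destruct Nat.eq_dec; [|lia]. rewrite Rminus_diag, Rabs_R0; auto. Qed.

Lemma div_ge1 a c : 0 < c -> 2 * c <= a -> 1 <= (a - c) / c.
Proof. intros. apply (Rmult_le_reg_r c); auto. unfold Rdiv. rewrite Rmult_assoc, Rinv_l; lra. Qed.
Lemma div_lt a c m : 0 < c -> (a - c) / c < m -> a < c * (m + 1).
Proof. intros H1 H2. apply (Rmult_lt_compat_r c) in H2; auto. unfold Rdiv in H2.
  rewrite Rmult_assoc, Rinv_l in H2; lra. Qed.
Lemma div_neg a c : 0 < c -> a <= 0 -> (a - c) / c <= 0.
Proof. intros. unfold Rdiv. assert (0 < / c) by (apply Rinv_0_lt_compat; auto). nra. Qed.

Lemma localize N e T v phi Dt Dx t0 x0 r :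
  junction_dirs N e -> 0 < T -> usc_JT N e T v -> C1star N e T phi Dt Dx -> inJT N e T t0 x0 -> 0 < r ->
  (forall t y, inBallJT N e T t0 x0 r t y -> v t y <= phi t y) ->
  exists phi2 Dt2 Dx2, C1star N e T phi2 Dt2 Dx2 /\
    (forall t y, inJT N e T t y -> v t y <= phi2 t y) /\
    phi2 t0 x0 = phi t0 x0 /\ Dt2 t0 x0 = Dt t0 x0 /\
    (forall k s, (k < N)%nat -> 0 <= s -> x0 = pt e k s -> Dx2 k t0 s = Dx k t0 s).
Proof.
  intros HJ HT Hv [Hpc Hpb] Hx0 Hr Hloc.
  destruct (inJT_dec _ _ _ _ _ Hx0) as [i0 [s0 [Hi0 [Hs0 [Ex0 Ht0]]]]].
  set (c1 := r^2 / (2*T)). set (c2 := r^2/2).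
  assert (Hc1 : 0 < c1) by (unfold c1; apply Rdiv_lt_0_compat; nra).
  assert (Hc2 : 0 < c2) by (unfold c2; nra).
  set (w := wf t0 T).
  assert (Bnd : forall n : nat, exists M, forall t x, inJT N e T t x -> w t <= c1 * (INR n + 3) ->
       (dJ N e x0 x)^2 <= c2 * (INR n + 3) -> v t x - phi t x <= M).
  { intros n. set (A := c1 * (INR n + 3)). set (D := c2 * (INR n + 3)).
    assert (HA : 0 <= A) by (unfold A; pose proof (pos_INR n); nra).
    assert (HD : 0 <= D) by (unfold D; pose proof (pos_INR n); nra).
    destruct (JT_bound N e T (fun t x => v t x - phi t x) (aA t0 A) (bA t0 T A) (s0 + 1 + D)) as [M HM]; auto.
    - apply usc_minus; auto.
    - apply aA_pos; lra.
    - apply aA_le_bA; lra.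
    - apply bA_lt; lra.
    - lra.
    - exists M. intros t x Hx Hw HdJ.
      destruct (inJT_dec _ _ _ _ _ Hx) as [k [s [Hk [Hs [-> Ht]]]]].
      apply HM; auto.
      + apply wf_bounds; auto; lra.
      + split; auto. rewrite Ex0 in HdJ. rewrite qf_dJ in HdJ; auto. unfold qf in HdJ.
        destruct (Nat.eq_dec i0 k); nra. }
  set (bf := fun n => proj1_sig (constructive_indefinite_description _ (Bnd n))).
  assert (Hbf : forall n t x, inJT N e T t x -> w t <= c1 * (INR n + 3) ->
       (dJ N e x0 x)^2 <= c2 * (INR n + 3) -> v t x - phi t x <= bf n).
  { intros n. unfold bf. destruct (constructive_indefinite_description _ _) as [M HM]. exact HM. }
  destruct (Gamma_exists bf) as [G [G' [HGd [HGc [HG0 [HGpos HGb]]]]]].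
  set (yF := fun t => (w t - c1)/c1).
  set (F := fun t => G (yF t)). set (dF := fun t => G' (yF t) * (dwf t0 T t / c1)).
  set (yG := fun x => ((dJ N e x0 x)^2 - c2)/c2). set (Gx := fun x => G (yG x)).
  set (hG := fun k s => G ((qf i0 s0 k s - c2)/c2)).
  set (dhG := fun k s => G' ((qf i0 s0 k s - c2)/c2) * (dqf i0 s0 k s / c2)).
  assert (HyFd : forall t, 0 < t < T -> derivable_pt_lim yF t (dwf t0 T t / c1)).
  { intros t Ht. unfold yF, w. apply is_derive_Reals. unfold wf, dwf. auto_derive. repeat split; nra. field. repeat split; lra. }
  assert (HFd : forall t, 0 < t < T -> derivable_pt_lim F t (dF t)).
  { intros t Ht. exact (derivable_pt_lim_comp yF G t _ _ (HyFd t Ht) (HGd (yF t))). }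
  assert (HFc : forall t, 0 < t < T -> continuity_pt dF t).
  { intros t Ht. apply continuity_pt_mult.
    - apply (continuity_pt_comp yF G'); [apply (dlim_cont _ _ _ (HyFd t Ht))|apply HGc].
    - apply exd_cont. unfold dwf. auto_derive. repeat split; nra. }
  assert (Hqd : forall k s, derivable_pt_lim (fun s => (qf i0 s0 k s - c2)/c2) s (dqf i0 s0 k s / c2)).
  { intros k s. apply is_derive_Reals. unfold qf, dqf. destruct Nat.eq_dec; auto_derive; auto; field; lra. }
  assert (HhGd : forall k s, derivable_pt_lim (hG k) s (dhG k s)).
  { intros k s. exact (derivable_pt_lim_comp _ G s _ _ (Hqd k s) (HGd _)). }
  assert (HhGc : forall k s, continuity_pt (dhG k) s).
  { intros k s. apply continuity_pt_mult.
    - apply (continuity_pt_comp (fun s => (qf i0 s0 k s - c2)/c2) G'); [apply (dlim_cont _ _ _ (Hqd k s))|apply HGc].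
    - apply exd_cont. unfold dqf. destruct Nat.eq_dec; auto_derive; auto. }
  assert (HGxb : forall k s, (k < N)%nat -> 0 <= s -> Gx (pt e k s) = hG k s).
  { intros k s Hk Hs. unfold Gx, yG, hG. rewrite Ex0, qf_dJ; auto. }
  exists (fun t x => phi t x + F t + Gx x), (fun t x => Dt t x + dF t), (fun k t s => Dx k t s + dhG k s).
  split; [split|split; [|split; [|split]]].
  - apply cont_JT_plus; [apply cont_JT_plus; auto|].
    + apply cont_JT_branch; auto. intros k Hk. apply (cont_HS_t T F). intros t Ht. apply (dlim_cont _ _ _ (HFd t Ht)).
    + apply cont_JT_branch; auto. intros k Hk. apply (cont_HS_ext T _ (fun t s => hG k s)).
      * intros t s [_ Hs]. apply HGxb; auto.
      * apply cont_HS_s. intros s. apply (dlim_cont _ _ _ (HhGd k s)).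
  - intros k Hk.
    eapply C1_HS_ext; [| | |apply (C1_HS_plus _ _ _ _ _ _ _ (C1_HS_plus _ _ _ _ _ _ _ (Hpb k Hk) (C1_HS_t T F dF HFd HFc)) (C1_HS_s T (hG k) (dhG k) (HhGd k) (HhGc k)))].
    + intros t s [_ Hs]. cbv beta. rewrite HGxb; auto.
    + intros t s _. cbv beta. ring.
    + intros t s _. cbv beta. ring.
  - intros t y Hy.
    assert (HF0 : 0 <= F t) by apply HGpos. assert (HG0' : 0 <= Gx y) by apply HGpos.
    destruct (classic (Rabs (t - t0) < r /\ dJ N e x0 y < r)) as [[H1 H2]|Hn].
    + pose proof (Hloc t y (conj Hy (conj H1 H2))). lra.
    + destruct Hy as [Ht Hy'].
      assert (Hor : 1 <= yF t \/ 1 <= yG y).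
      { apply not_and_or in Hn. destruct Hn as [Hn|Hn]; [left|right].
        - apply div_ge1; auto. apply Rnot_lt_le in Hn.
          assert (r^2 <= (t - t0)^2) by (rewrite <- (pow2_abs (t - t0)); nra).
          eapply Rle_trans; [|apply wf_geT; auto]. unfold c1.
          replace (2 * (r ^ 2 / (2 * T))) with (r^2 / T) by (field; lra).
          unfold Rdiv; apply Rmult_le_compat_r; auto. left; apply Rinv_0_lt_compat; lra.
        - apply div_ge1; auto. apply Rnot_lt_le in Hn. unfold c2. nra. }
      destruct (index_ex (yF t)) as [nF [aF [bF cF]]].
      destruct (index_ex (yG y)) as [nG [aG [bG cG]]].
      set (n := Nat.max nF nG).
      assert (HnF : INR nF <= INR n) by (apply le_INR; apply Nat.le_max_l).
      assert (HnG : INR nG <= INR n) by (apply le_INR; apply Nat.le_max_r).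
      assert (Hw : w t <= c1 * (INR n + 3)).
      { apply div_lt in aF; auto. nra. }
      assert (HdJ : (dJ N e x0 y)^2 <= c2 * (INR n + 3)).
      { apply div_lt in aG; auto. nra. }
      pose proof (Hbf n t y (conj Ht Hy') Hw HdJ).
      assert (bf n <= F t + Gx y).
      { destruct (Nat.le_ge_cases nG nF) as [L|L].
        - assert (En : n = nF) by (apply Nat.max_l; auto).
          destruct (Rle_lt_dec 1 (yF t)) as [Y|Y].
          + rewrite En. pose proof (HGb nF (yF t) (bF Y)). unfold F. lra.
          + pose proof (cF Y) as Z. assert (nG = 0%nat) by lia.
            destruct Hor as [Hor|Hor]; [lra|].
            assert (n = nG) by lia. rewrite H1. pose proof (HGb nG (yG y) (bG Hor)). unfold Gx. lra.
        - assert (En : n = nG) by (apply Nat.max_r; auto).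
          destruct (Rle_lt_dec 1 (yG y)) as [Y|Y].
          + rewrite En. pose proof (HGb nG (yG y) (bG Y)). unfold Gx. lra.
          + pose proof (cG Y) as Z. assert (nF = 0%nat) by lia.
            destruct Hor as [Hor|Hor]; [|lra].
            assert (n = nF) by lia. rewrite H1. pose proof (HGb nF (yF t) (bF Hor)). unfold F. lra. }
      lra.
  - assert (E1 : yF t0 <= 0) by (unfold yF, w; rewrite wf_t0; apply div_neg; lra).
    assert (E2 : yG x0 <= 0) by (unfold yG; rewrite Ex0, dJ_self; auto; apply div_neg; lra).
    unfold F, Gx. rewrite (proj1 (HG0 _ E1)), (proj1 (HG0 _ E2)). ring.
  - assert (E1 : yF t0 <= 0) by (unfold yF, w; rewrite wf_t0; apply div_neg; lra).
    unfold dF. rewrite (proj2 (HG0 _ E1)). ring.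
  - intros k s Hk Hs Exk. unfold dhG.
    assert (E : (qf i0 s0 k s - c2) / c2 <= 0).
    { rewrite <- (qf_dJ N e i0 s0 k s) by auto. rewrite <- Exk, Ex0, dJ_self by auto. apply div_neg; nra. }
    rewrite (proj2 (HG0 _ E)). ring.
Qed.


Lemma A1_lb N H i : A1' N H -> (i < N)%nat -> exists m, forall p, m <= H i p.
Proof.
  intros HA Hi. destruct (HA i Hi) as [_ [_ [p0 [H1 H2]]]]. exists (H i p0). intros p.
  destruct (Rle_dec p p0). apply H1; lra. apply H2; lra.
Qed.

Lemma Rinf_cond N H i p : A1' N H -> (i < N)%nat ->
  bound (fun x => (fun y => exists q, q <= 0 /\ y = H i (p + q)) (- x)) /\
  exists x, (fun y => exists q, q <= 0 /\ y = H i (p + q)) (- x).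
Proof.
  intros HA Hi. destruct (A1_lb N H i HA Hi) as [m Hm]. split.
  - exists (- m). intros x [q [_ Hx]]. pose proof (Hm (p + q)). lra.
  - exists (- H i p). exists 0. split; [lra|]. rewrite Ropp_involutive, Rplus_0_r; auto.
Qed.

Lemma Hminus_le N H i p : A1' N H -> (i < N)%nat -> Hminus (H i) p <= H i p.
Proof.
  intros HA Hi. unfold Hminus, Rinf.
  destruct (ClassicalDescription.excluded_middle_informative _) as [h|h].
  - match goal with |- context [proj1_sig ?X] => generalize X end. intros [x [Hub Hlub0]]. simpl.
    assert (- H i p <= x). { apply Hub. exists 0. split; [lra|]. rewrite Ropp_involutive, Rplus_0_r; auto. }
    lra.
  - exfalso. apply h. apply (Rinf_cond N); auto.
Qed.

Lemma Hminus_lt N H i p l : A1' N H -> (i < N)%nat -> Hminus (H i) p < l -> exists q, q <= p /\ H i q < l.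
Proof.
  intros HA Hi. unfold Hminus, Rinf.
  destruct (ClassicalDescription.excluded_middle_informative _) as [h|h].
  - match goal with |- context [proj1_sig ?X] => generalize X end. intros [x [Hub Hlub]]. simpl. intros Hl.
    apply NNPP. intro Hn. assert (x <= - l); [|lra].
    apply Hlub. intros y [q [Hq Hy]]. apply Rnot_lt_le. intro Hlt. apply Hn.
    exists (p + q). split; [lra|]. lra.
  - exfalso. apply h. apply (Rinf_cond N); auto.
Qed.

Lemma maxUpTo_ge f n j : (j <= n)%nat -> f j <= maxUpTo f n.
Proof.
  induction n as [|n IH]; intros Hj; simpl.
  - replace j with 0%nat by lia. lra.
  - destruct (Nat.eq_dec j (S n)) as [->|]. apply Rmax_r.
    eapply Rle_trans; [apply IH; lia|apply Rmax_l].
Qed.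

Lemma maxUpTo_gt f n l : l < maxUpTo f n -> exists j, (j <= n)%nat /\ l < f j.
Proof.
  induction n as [|n IH]; simpl; intros Hl.
  - exists 0%nat; split; auto.
  - unfold Rmax in Hl. destruct (Rle_dec (maxUpTo f n) (f (S n))).
    + exists (S n); split; auto.
    + destruct (IH Hl) as [j [Hj Hfj]]. exists j; split; auto.
Qed.

Lemma maxUpTo_lt f n l : (forall j, (j <= n)%nat -> f j < l) -> maxUpTo f n < l.
Proof.
  induction n as [|n IH]; simpl; intros Hl.
  - apply Hl; auto.
  - apply Rmax_lub_lt; auto.
Qed.

Lemma maxUpTo_ext f g n : (forall j, (j <= n)%nat -> f j = g j) -> maxUpTo f n = maxUpTo g n.
Proof.
  induction n as [|n IH]; simpl; intros Hl.
  - apply Hl; auto.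
  - rewrite IH, Hl; auto.
Qed.

Definition slopefun N e (c : nat -> R) (x : R * R) : R :=
  match ClassicalDescription.excluded_middle_informative (exists k s, (k < N)%nat /\ 0 < s /\ x = pt e k s) with
  | left h => c (proj1_sig (constructive_indefinite_description _ h)) * normR2 x
  | right _ => 0
  end.

Lemma slope_pt N e c k s : junction_dirs N e -> (k < N)%nat -> 0 <= s -> slopefun N e c (pt e k s) = c k * s.
Proof.
  intros HJ Hk Hs. pose proof HJ as [HN [Hu Hd]]. unfold slopefun.
  destruct (ClassicalDescription.excluded_middle_informative _) as [h|h].
  - destruct (constructive_indefinite_description _ h) as [k' [s' [Hk' [Hs' E]]]]. simpl.
    rewrite normR2_pt; auto.
    destruct (Rle_lt_or_eq_dec 0 s Hs) as [Hsp|<-]; [|ring].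
    destruct (pt_inj N e k k' s s') as [<- _]; auto.
  - destruct (Rle_lt_or_eq_dec 0 s Hs) as [Hsp|<-]; [|ring].
    exfalso. apply h. exists k, s. auto.
Qed.

Lemma slope_C1star N e T c : junction_dirs N e ->
  C1star N e T (fun t x => slopefun N e c x) (fun _ _ => 0) (fun k _ _ => c k).
Proof.
  intros HJ. assert (Hd : forall k s, derivable_pt_lim (fun s => c k * s) s (c k)).
  { intros. apply is_derive_Reals. auto_derive; auto. ring. }
  split.
  - apply cont_JT_branch; auto. intros k Hk. apply (cont_HS_ext T _ (fun t s => c k * s)).
    + intros t s [_ Hs]. apply slope_pt; auto.
    + apply cont_HS_s. intros s. apply (dlim_cont _ _ _ (Hd k s)).
  - intros k Hk. eapply C1_HS_ext; [| | |apply (C1_HS_s T (fun s => c k * s) (fun _ => c k) (Hd k))].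
    + intros t s [_ Hs]. apply slope_pt; auto.
    + auto.
    + auto.
    + intros s. apply eps_cont. intros eps He. exists 1. split; [lra|]. intros. rewrite Rminus_diag, Rabs_R0; auto.
Qed.

Lemma maxI_ge N f j : (j < N)%nat -> f j <= maxI N f.
Proof. intros. unfold maxI. apply maxUpTo_ge. lia. Qed.
Lemma maxI_gt N f l : (1 <= N)%nat -> l < maxI N f -> exists j, (j < N)%nat /\ l < f j.
Proof. intros HN Hl. destruct (maxUpTo_gt f (N-1) l Hl) as [j [Hj H]]. exists j; split; auto; lia. Qed.
Lemma maxI_lt N f l : (1 <= N)%nat -> (forall j, (j < N)%nat -> f j < l) -> maxI N f < l.
Proof. intros HN Hl. apply maxUpTo_lt. intros j Hj; apply Hl; lia. Qed.
Lemma maxI_ext N f g : (1 <= N)%nat -> (forall j, (j < N)%nat -> f j = g j) -> maxI N f = maxI N g.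
Proof. intros HN Hl. apply maxUpTo_ext. intros j Hj; apply Hl; lia. Qed.

Lemma origin_pt N e : junction_dirs N e -> origin = pt e 0 0.
Proof. intros. rewrite pt0; auto. Qed.

Lemma junction_sub N e T H u t0 phi Dt Dx : junction_dirs N e -> A1' N H -> subchar N e T H u ->
  C1star N e T phi Dt Dx -> (forall t y, inJT N e T t y -> u t y <= phi t y) -> inJT N e T t0 origin ->
  u t0 origin = phi t0 origin -> Dt t0 origin + H0 N H (fun i => Dx i t0 0) <= 0.
Proof.
  intros HJ HA Hsub Hc Hle Hx Heq. pose proof HJ as [HN _]. apply Rnot_lt_le. intro Hgt.
  set (lam := - Dt t0 origin). set (p := fun i => Dx i t0 0).
  destruct (maxI_gt N (fun i => Hminus (H i) (p i)) lam HN) as [j [Hj Hjl]].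
  { unfold H0 in Hgt. unfold lam, p. lra. }
  assert (Cex : forall k, exists ck, 0 <= ck /\ ((k < N)%nat -> (lam < H k (p k) -> ck = 0) /\ lam < H k (p k + ck))).
  { intros k. destruct (classic ((k < N)%nat)) as [Hk|Hk]; [|exists 0; split; [lra|intro; contradiction]].
    destruct (Rlt_le_dec lam (H k (p k))).
    - exists 0. split; [lra|]. intros _. split; auto. rewrite Rplus_0_r; auto.
    - destruct (HA k Hk) as [_ [Hco _]]. destruct (Hco lam) as [K HK].
      pose proof (Rabs_pos K). pose proof (Rabs_pos (p k)).
      exists (Rabs K + Rabs (p k) + 1). split; [lra|]. intros _. split; [intro; lra|].
      apply HK. pose proof (Rle_abs (- p k)) as Z1. rewrite Rabs_Ropp in Z1. pose proof (Rle_abs K).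
      rewrite (Rabs_right (p k + _)); lra. }
  set (c := fun k => proj1_sig (constructive_indefinite_description _ (Cex k))).
  assert (Hcp : forall k, 0 <= c k /\ ((k < N)%nat -> (lam < H k (p k) -> c k = 0) /\ lam < H k (p k + c k))).
  { intros k. unfold c. destruct (constructive_indefinite_description _ _) as [ck Hck]. exact Hck. }
  destruct (Hsub (fun t x => phi t x + slopefun N e c x) (fun t x => Dt t x + 0) (fun k t s => Dx k t s + c k))
    with (t := t0) (x := origin) as [_ Hj0]; auto.
  - apply C1star_plus; auto. apply slope_C1star; auto.
  - intros t y Hy. destruct (inJT_dec _ _ _ _ _ Hy) as [k [s [Hk [Hs [-> _]]]]].
    rewrite slope_pt; auto. pose proof (Hle t (pt e k s) Hy). pose proof (proj1 (Hcp k)). nra.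
  - assert (Z : slopefun N e c origin = 0) by (rewrite (origin_pt N e HJ), slope_pt; [ring|auto|lia|lra]). rewrite Z, Heq; ring.
  - destruct (Hj0 eq_refl) as [[i [Hi Hle']]|Hle'].
    + destruct (proj2 (Hcp i) Hi) as [_ Hl]. unfold p, lam in Hl. lra.
    + assert (Hcj : c j = 0).
      { apply (proj2 (Hcp j) Hj). eapply Rlt_le_trans; [apply Hjl|]. apply (Hminus_le N); auto. }
      pose proof (maxI_ge N (fun i => Hminus (H i) (Dx i t0 0 + c i)) j Hj) as Z1. simpl in Z1.
      rewrite Hcj, Rplus_0_r in Z1. unfold H0 in Hle'. unfold lam, p in Hjl. lra.
Qed.

Lemma junction_super N e T H u t0 phi Dt Dx : junction_dirs N e -> A1' N H -> superchar N e T H u ->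
  C1star N e T phi Dt Dx -> (forall t y, inJT N e T t y -> phi t y <= u t y) -> inJT N e T t0 origin ->
  u t0 origin = phi t0 origin -> 0 <= Dt t0 origin + H0 N H (fun i => Dx i t0 0).
Proof.
  intros HJ HA Hsup Hc Hle Hx Heq. pose proof HJ as [HN _]. apply Rnot_lt_le. intro Hgt.
  set (lam := - Dt t0 origin). set (p := fun i => Dx i t0 0).
  assert (Cex : forall k, exists ck, ck <= 0 /\ ((k < N)%nat -> H k (p k + ck) < lam)).
  { intros k. destruct (classic ((k < N)%nat)) as [Hk|Hk]; [|exists 0; split; [lra|intro; contradiction]].
    destruct (Hminus_lt N H k (p k) lam HA Hk) as [q [Hq Hql]].
    { eapply Rle_lt_trans; [apply (maxI_ge N (fun i => Hminus (H i) (p i))); auto|]. unfold H0 in Hgt. unfold lam, p. lra. }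
    exists (q - p k). split; [lra|]. intros _. replace (p k + (q - p k)) with q by ring. auto. }
  set (c := fun k => proj1_sig (constructive_indefinite_description _ (Cex k))).
  assert (Hcp : forall k, c k <= 0 /\ ((k < N)%nat -> H k (p k + c k) < lam)).
  { intros k. unfold c. destruct (constructive_indefinite_description _ _) as [ck Hck]. exact Hck. }
  destruct (Hsup (fun t x => phi t x + slopefun N e c x) (fun t x => Dt t x + 0) (fun k t s => Dx k t s + c k))
    with (t := t0) (x := origin) as [_ Hj0]; auto.
  - apply C1star_plus; auto. apply slope_C1star; auto.
  - intros t y Hy. destruct (inJT_dec _ _ _ _ _ Hy) as [k [s [Hk [Hs [-> _]]]]].
    rewrite slope_pt; auto. pose proof (Hle t (pt e k s) Hy). pose proof (proj1 (Hcp k)). nra.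
  - assert (Z : slopefun N e c origin = 0) by (rewrite (origin_pt N e HJ), slope_pt; [ring|auto|lia|lra]). rewrite Z, Heq; ring.
  - destruct (Hj0 eq_refl) as [[i [Hi Hle']]|Hle'].
    + pose proof (proj2 (Hcp i) Hi) as Z1. unfold p, lam in Z1. lra.
    + assert (Z1 : maxI N (fun i => Hminus (H i) (Dx i t0 0 + c i)) < lam).
      { apply maxI_lt; auto. intros j Hj. eapply Rle_lt_trans; [apply (Hminus_le N); auto|]. apply (proj2 (Hcp j) Hj). }
      unfold H0 in Hle'. unfold lam in Z1. lra.
Qed.


Theorem mainTheorem5 (N : nat) (e : nat -> R * R) (T : R) (H : nat -> R -> R)
  (u : R -> R * R -> R) :
  junction_dirs N e -> 0 < T -> A1' N H ->
  (usc_JT N e T u -> (subsol N e T H u <-> subchar N e T H u)) /\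
  (lsc_JT N e T u -> (supersol N e T H u <-> superchar N e T H u)).
Proof.
  intros HJ HT HA. pose proof HJ as [HN _]. split.
  - intros Husc. split.
    + intros [_ Hs] phi Dt Dx Hc Hglob t x Hx Heq.
      assert (Hl : forall t' y, inBallJT N e T t x 1 t' y -> u t' y <= phi t' y) by (intros t' y [Hy _]; apply Hglob; auto).
      destruct (Hs phi Dt Dx Hc t x 1 Hx ltac:(lra) Hl Heq) as [H1 H2].
      split; [exact H1|intros Ho; right; apply H2; exact Ho].
    + intros Hch. split; auto. intros phi Dt Dx Hc t0 x0 r Hx Hr Hloc Heq.
      destruct (localize N e T u phi Dt Dx t0 x0 r) as [phi2 [Dt2 [Dx2 [Hc2 [Hglob [Hv [Hdt Hdx]]]]]]]; auto.
      assert (Heq2 : u t0 x0 = phi2 t0 x0) by (rewrite Hv; auto).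
      split.
      * intros i s Hst. destruct (Hch phi2 Dt2 Dx2 Hc2 Hglob t0 x0 Hx Heq2) as [H1 _].
        specialize (H1 i s Hst). destruct Hst as [Hi [Hs Ex]].
        rewrite Hdt, Hdx in H1; auto; lra.
      * intros ->. pose proof (junction_sub N e T H u t0 phi2 Dt2 Dx2 HJ HA Hch Hc2 Hglob Hx Heq2) as Z.
        rewrite Hdt in Z. unfold H0 in *. erewrite maxI_ext; [apply Z|auto|].
        intros j Hj. simpl. rewrite Hdx; auto; [lra|]. rewrite pt0; auto.
  - intros Hlsc. split.
    + intros [_ Hs] phi Dt Dx Hc Hglob t x Hx Heq.
      assert (Hl : forall t' y, inBallJT N e T t x 1 t' y -> phi t' y <= u t' y) by (intros t' y [Hy _]; apply Hglob; auto).
      destruct (Hs phi Dt Dx Hc t x 1 Hx ltac:(lra) Hl Heq) as [H1 H2].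
      split; [exact H1|intros Ho; right; apply H2; exact Ho].
    + intros Hch. split; auto. intros phi Dt Dx Hc t0 x0 r Hx Hr Hloc Heq.
      destruct (localize N e T (fun t x => - u t x) (fun t x => - phi t x) (fun t x => - Dt t x)
                  (fun k t s => - Dx k t s) t0 x0 r) as [phi2 [Dt2 [Dx2 [Hc2 [Hglob [Hv [Hdt Hdx]]]]]]]; auto.
      { apply usc_of_lsc; auto. }
      { apply C1star_opp; auto. }
      { intros t y Hb. pose proof (Hloc t y Hb). lra. }
      pose proof (C1star_opp _ _ _ _ _ _ Hc2) as Hc3.
      assert (Hglob3 : forall t y, inJT N e T t y -> - phi2 t y <= u t y) by (intros t y Hy; pose proof (Hglob t y Hy); lra).
      assert (Heq3 : u t0 x0 = - phi2 t0 x0) by (rewrite Hv; lra).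
      split.
      * intros i s Hst. destruct (Hch _ _ _ Hc3 Hglob3 t0 x0 Hx Heq3) as [H1 _].
        specialize (H1 i s Hst). destruct Hst as [Hi [Hs Ex]].
        rewrite Hdt, Hdx in H1; auto; [rewrite !Ropp_involutive in H1; exact H1|lra].
      * intros ->. pose proof (junction_super N e T H u t0 _ _ _ HJ HA Hch Hc3 Hglob3 Hx Heq3) as Z.
        cbv beta in Z. rewrite Hdt, Ropp_involutive in Z. unfold H0 in *. erewrite maxI_ext; [apply Z|auto|].
        intros j Hj. simpl. rewrite Hdx; auto; [rewrite Ropp_involutive; reflexivity|lra|]. rewrite pt0; auto.
Qed.
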